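(* There exists a constant $C>0$ such that for any $\epsilon\in(0,\tfrac12]$ there exists a ReLU neural network $\Xi_\epsilon:\mathbb{R}^2\to\mathbb{R}$ such that \[ \sup_{\xi\in[0,2\pi-\epsilon]}|\xi-\Xi_\epsilon(\cos\xi,\sin\xi)|\le\epsilon, \] $\Xi_\epsilon(\cos\xi,\sin\xi)\in[0,2\pi]$ for all $\xi\in[0,2\pi]$, and $\mathrm{depth}(\Xi_\epsilon)\le C\log(\epsilon^{-1})^2$, $\mathrm{width}(\Xi_\epsilon)\le C$.
   Context: ReLU is $\sigma(x)=\max(x,0)$. For a neural network, depth is the number of hidden layers and width the maximal number of neurons in a hidden layer. *)

(* Defs.v *)
From HB Require Import structures.
From mathcomp Require Import all_boot all_order all_algebra.
From mathcomp Require Import reals exp trigo.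
Set Implicit Arguments. Unset Strict Implicit. Unset Printing Implicit Defensive.
Import Order.TTheory GRing.Theory Num.Theory.
Local Open Scope ring_scope.

Definition relu (R : realType) (x : R) : R := Num.max x 0.
Definition relu_vec (R : realType) n (v : 'cV[R]_n) : 'cV[R]_n :=
  \col_i relu (v i 0).

Inductive relu_net (R : realType) : nat -> Type :=
| OutLayer : forall n, 'rV[R]_n -> R -> relu_net R n
| HiddenLayer : forall n m, 'M[R]_(m, n) -> 'cV[R]_m -> relu_net R m ->
    relu_net R n.

Fixpoint realize (R : realType) n (N : relu_net R n) : 'cV[R]_n -> R :=
  match N in relu_net _ k return 'cV[R]_k -> R with
  | OutLayer _ w c => fun x => (w *m x) 0 0 + c
  | HiddenLayer _ _ W b N' => fun x => realize N' (relu_vec (W *m x + b))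
  end.

Fixpoint depth (R : realType) n (N : relu_net R n) : nat :=
  match N with
  | OutLayer _ _ _ => 0
  | HiddenLayer _ _ _ _ N' => (depth N').+1
  end.

Fixpoint width (R : realType) n (N : relu_net R n) : nat :=
  match N with
  | OutLayer _ _ _ => 0
  | HiddenLayer _ m _ _ N' => maxn m (width N')
  end.

Definition pt2 (R : realType) (a b : R) : 'cV[R]_2 :=
  \col_(i < 2) (if val i == 0%N then a else b).

(* Main.v *)
Require Import Defs.
From HB Require Import structures.
From mathcomp Require Import all_boot all_order all_algebra.
From mathcomp Require Import boolp classical_sets topology normedtype derive.
From mathcomp Require Import reals exp trigo.
From mathcomp Require Import ring lra zify.
From Stdlib Require Import Lia.
Set Implicit Arguments. Unset Strict Implicit. Unset Printing Implicit Defensive.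
Import Order.TTheory GRing.Theory Num.Theory.
Import numFieldNormedType.Exports.
Local Open Scope ring_scope.
Local Open Scope classical_set_scope.

Inductive vnet (R : realType) (m : nat) : nat -> Type :=
| VOut n : 'M[R]_(m, n) -> 'cV[R]_m -> vnet R m n
| VHid n k : 'M[R]_(k, n) -> 'cV[R]_k -> vnet R m k -> vnet R m n.

Fixpoint vreal (R : realType) m n (N : vnet R m n) : 'cV[R]_n -> 'cV[R]_m :=
  match N with
  | VOut _ A b => fun x => A *m x + b
  | VHid _ _ W c N' => fun x => vreal N' (relu_vec (W *m x + c))
  end.
Fixpoint vdepth (R : realType) m n (N : vnet R m n) : nat :=
  match N with VOut _ _ _ => 0%N | VHid _ _ _ _ N' => (vdepth N').+1 end.
Fixpoint vwidth (R : realType) m n (N : vnet R m n) : nat :=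
  match N with VOut _ _ _ => 0%N | VHid _ k _ _ N' => maxn k (vwidth N') end.

Definition vpre (R : realType) m n p (N : vnet R m n) : 'M[R]_(n,p) -> 'cV[R]_n -> vnet R m p :=
  match N in vnet _ _ n' return 'M[R]_(n',p) -> 'cV[R]_n' -> vnet R m p with
  | VOut _ A' b' => fun A b => VOut (A' *m A) (A' *m b + b')
  | VHid _ _ W c N' => fun A b => VHid (W *m A) (W *m b + c) N'
  end.

Fixpoint vcomp (R : realType) m n p (N1 : vnet R n p) (N2 : vnet R m n) : vnet R m p :=
  match N1 with
  | VOut _ A b => vpre N2 A b
  | VHid _ _ W c N1' => VHid W c (vcomp N1' N2)
  end.

Lemma vpreE (R : realType) m n p (N : vnet R m n) (A : 'M_(n,p)) b x :
  vreal (vpre N A b) x = vreal N (A *m x + b).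
Proof.
case: N A b => [n' A' b'|n' k W c N'] A b /=.
  by rewrite mulmxDr mulmxA addrA.
by rewrite mulmxDr mulmxA addrA.
Qed.

Lemma vpre_depth (R : realType) m n p (N : vnet R m n) (A : 'M_(n,p)) b :
  vdepth (vpre N A b) = vdepth N.
Proof. by case: N A b. Qed.
Lemma vpre_width (R : realType) m n p (N : vnet R m n) (A : 'M_(n,p)) b :
  vwidth (vpre N A b) = vwidth N.
Proof. by case: N A b. Qed.

Lemma vcompE (R : realType) m n p (N1 : vnet R n p) (N2 : vnet R m n) x :
  vreal (vcomp N1 N2) x = vreal N2 (vreal N1 x).
Proof.
elim: N1 N2 x => [p' A b|p' k W c N1 IH] N2 x /=; first by rewrite vpreE.
by rewrite IH.
Qed.

Lemma vcomp_depth (R : realType) m n p (N1 : vnet R n p) (N2 : vnet R m n) :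
  vdepth (vcomp N1 N2) = (vdepth N1 + vdepth N2)%N.
Proof. by elim: N1 N2 => [p' A b|p' k W c N1 IH] N2 /=; rewrite ?vpre_depth ?IH. Qed.

Lemma vcomp_width (R : realType) m n p (N1 : vnet R n p) (N2 : vnet R m n) :
  vwidth (vcomp N1 N2) = maxn (vwidth N1) (vwidth N2).
Proof.
elim: N1 N2 => [p' A b|p' k W c N1 IH] N2 /=; first by rewrite vpre_width max0n.
by rewrite IH maxnA.
Qed.

Fixpoint toRelu (R : realType) n (N : vnet R 1 n) : relu_net R n :=
  match N with
  | VOut _ A b => OutLayer A (b 0 0)
  | VHid _ _ W c N' => HiddenLayer W c (toRelu N')
  end.

Lemma toReluE (R : realType) n (N : vnet R 1 n) x : realize (toRelu N) x = vreal N x 0 0.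
Proof. by elim: N x => [n' A b|n' k W c N IH] x /=; rewrite ?mxE ?IH. Qed.
Lemma toRelu_depth (R : realType) n (N : vnet R 1 n) : depth (toRelu N) = vdepth N.
Proof. by elim: N => //= n' k W c N ->. Qed.
Lemma toRelu_width (R : realType) n (N : vnet R 1 n) : width (toRelu N) = vwidth N.
Proof. by elim: N => //= n' k W c N ->. Qed.

Definition NetF (R : realType) m n (f : 'cV[R]_n -> 'cV[R]_m) (d w : nat) :=
  exists N : vnet R m n, (forall x, vreal N x = f x) /\ (vdepth N <= d)%N /\ (vwidth N <= w)%N.

Lemma net_comp (R : realType) m n p (f : 'cV[R]_p -> 'cV[R]_n) (g : 'cV[R]_n -> 'cV[R]_m) d1 w1 d2 w2 :
  NetF f d1 w1 -> NetF g d2 w2 -> NetF (fun x => g (f x)) (d1 + d2) (maxn w1 w2).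
Proof.
move=> [N1 [E1 [D1 W1]]] [N2 [E2 [D2 W2]]]; exists (vcomp N1 N2); split.
  by move=> x; rewrite vcompE E1 E2.
rewrite vcomp_depth vcomp_width; split; first exact: leq_add.
by rewrite geq_max !leq_max W1 W2 orbT.
Qed.

Lemma net_ext (R : realType) m n (f g : 'cV[R]_n -> 'cV[R]_m) d w :
  (forall x, f x = g x) -> NetF f d w -> NetF g d w.
Proof. by move=> E [N [E1 H]]; exists N; split=> // x; rewrite E1 E. Qed.

Lemma net_mono (R : realType) m n (f : 'cV[R]_n -> 'cV[R]_m) d w d' w' :
  (d <= d')%N -> (w <= w')%N -> NetF f d w -> NetF f d' w'.
Proof.
move=> dd ww [N [E [D W]]]; exists N; split=> //; split.
  exact: leq_trans dd. exact: leq_trans ww.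
Qed.

Lemma net_id (R : realType) n : NetF (fun x : 'cV[R]_n => x) 0 0.
Proof. by exists (VOut 1%:M 0); split=> // x /=; rewrite mul1mx addr0. Qed.

Definition aff (R : realType) n (g : 'cV[R]_n -> R) :=
  {a : 'I_n -> R & {c : R | forall x, g x = \sum_i a i * x i 0 + c}}.

Lemma aff_const (R : realType) n (c : R) : aff (fun _ : 'cV[R]_n => c).
Proof. exists (fun _ => 0); exists c => x; by rewrite big1 ?add0r // => i _; rewrite mul0r. Qed.

Lemma aff_proj (R : realType) n (i : 'I_n) : aff (fun x : 'cV[R]_n => x i 0).
Proof.
exists (fun j => (j == i)%:R); exists 0 => x.
rewrite addr0 (bigD1 i) //= eqxx mul1r big1 ?addr0 // => j /negbTE ->; by rewrite mul0r.
Qed.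

Lemma aff_add (R : realType) n (g h : 'cV[R]_n -> R) :
  aff g -> aff h -> aff (fun x => g x + h x).
Proof.
move=> [a [c Hg]] [b [d Hh]]; exists (fun i => a i + b i); exists (c + d) => x.
have -> : \sum_i (a i + b i) * x i 0 = \sum_i a i * x i 0 + \sum_i b i * x i 0.
  by rewrite -big_split; apply: eq_bigr => i _; rewrite mulrDl.
rewrite Hg Hh; ring.
Qed.

Lemma aff_scale (R : realType) n (k : R) (g : 'cV[R]_n -> R) :
  aff g -> aff (fun x => k * g x).
Proof.
move=> [a [c Hg]]; exists (fun i => k * a i); exists (k * c) => x.
rewrite Hg mulrDr mulr_sumr; congr (_ + _); apply: eq_bigr => i _; by rewrite mulrA.
Qed.

Lemma aff_opp (R : realType) n (g : 'cV[R]_n -> R) : aff g -> aff (fun x => - g x).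
Proof.
move=> H; have := aff_scale (-1) H.
move=> [a [c Hg]]; exists a; exists c => x; by rewrite -Hg mulN1r.
Qed.

Lemma aff_sub (R : realType) n (g h : 'cV[R]_n -> R) :
  aff g -> aff h -> aff (fun x => g x - h x).
Proof. by move=> Hg Hh; apply: aff_add => //; apply: aff_opp. Qed.

Ltac aff_tac := repeat first [ apply: aff_add | apply: aff_sub | apply: aff_opp
  | apply: aff_scale | apply: aff_proj | apply: aff_const ].

Lemma net_layer (R : realType) n m k (h : 'I_k -> 'cV[R]_n -> R) (o : 'I_m -> 'cV[R]_k -> R) :
  (forall i, aff (h i)) -> (forall j, aff (o j)) ->
  NetF (fun x => \col_j o j (\col_i relu (h i x))) 1 k.
Proof.
move=> Hh Ho.
pose W := \matrix_(i < k, l < n) projT1 (Hh i) l.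
pose c := \col_(i < k) sval (projT2 (Hh i)).
pose A := \matrix_(j < m, l < k) projT1 (Ho j) l.
pose b := \col_(j < m) sval (projT2 (Ho j)).
exists (VHid W c (VOut A b)); split; last by rewrite /= maxn0.
move=> x /=; apply/matrixP => j z; rewrite ord1 !mxE (svalP (projT2 (Ho j))).
congr (_ + _); apply: eq_bigr => l _; rewrite /relu_vec !mxE; congr (_ * _); congr relu.
rewrite (svalP (projT2 (Hh l))); congr (_ + _); apply: eq_bigr => l' _; by rewrite mxE.
Qed.

Lemma net_aff (R : realType) n m (o : 'I_m -> 'cV[R]_n -> R) :
  (forall j, aff (o j)) -> NetF (fun x => \col_j o j x) 0 0.
Proof.
move=> Ho.
pose A := \matrix_(j < m, l < n) projT1 (Ho j) l.
pose b := \col_(j < m) sval (projT2 (Ho j)).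
exists (VOut A b); split=> //.
move=> x /=; apply/matrixP => j z; rewrite ord1 !mxE (svalP (projT2 (Ho j))).
congr (_ + _); apply: eq_bigr => l _; by rewrite !mxE.
Qed.

Lemma relu_pos (R : realType) (z : R) : 0 <= z -> relu z = z.
Proof. by move=> h; rewrite /relu max_l. Qed.
Lemma relu_neg (R : realType) (z : R) : z <= 0 -> relu z = 0.
Proof. by move=> h; rewrite /relu max_r. Qed.
Lemma relu_ge0 (R : realType) (z : R) : 0 <= relu z.
Proof. by case: (lerP 0 z) => h; [rewrite relu_pos | rewrite relu_neg // ltW]. Qed.
Lemma reluN (R : realType) (z : R) : relu z - relu (- z) = z.
Proof.
case: (lerP 0 z) => h.
  by rewrite relu_pos // relu_neg ?subr0 // oppr_le0.
rewrite relu_neg ?ltW // relu_pos ?opprK ?sub0r ?add0r //; lra.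
Qed.

Definition cpt (R : realType) (x : 'cV[R]_6) (i : nat) := x (inord i) 0.

Definition blk (R : realType) (keep : 'I_6 -> bool) (k0 c1 c2 : 'I_6 -> R)
  (e1 e2 : 'cV[R]_6 -> R) :=
  fun x : 'cV[R]_6 => \col_j ((if keep j then x j 0 else k0 j)
        + c1 j * relu (e1 x) + c2 j * relu (e2 x)).

Lemma blk_net (R : realType) keep (k0 c1 c2 : 'I_6 -> R) (e1 e2 : 'cV[R]_6 -> R) :
  aff e1 -> aff e2 -> NetF (blk keep k0 c1 c2 e1 e2) 1 14.
Proof.
move=> H1 H2.
pose h := fun i : 'I_14 => if (nat_of_ord i < 6)%N then (fun x : 'cV[R]_6 => x (inord i) 0)
   else if (nat_of_ord i < 12)%N then (fun x : 'cV[R]_6 => - x (inord (nat_of_ord i - 6)) 0)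
   else if nat_of_ord i == 12%N then e1 else e2.
pose o := fun j : 'I_6 => if keep j then (fun y : 'cV[R]_14 => y (inord j) 0 - y (inord (nat_of_ord j + 6)) 0
   + c1 j * y (inord 12) 0 + c2 j * y (inord 13) 0)
   else (fun y : 'cV[R]_14 => k0 j + c1 j * y (inord 12) 0 + c2 j * y (inord 13) 0).
apply: net_ext (@net_layer R 6 6 14 h o _ _).
- move=> x; apply/matrixP => j z; rewrite ord1 !mxE /o.
  have j14 : (j < 14)%N by apply: leq_trans (ltn_ord j) _.
  have j614 : (j + 6 < 14)%N by rewrite -[14%N]/(8 + 6)%N ltn_add2r (leq_trans (ltn_ord j)).
  have e12 : nat_of_ord (inord 12 : 'I_14) = 12%N by rewrite inordK.
  have e13 : nat_of_ord (inord 13 : 'I_14) = 13%N by rewrite inordK.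
  have ej : nat_of_ord (inord j : 'I_14) = j by rewrite inordK.
  have ej6 : nat_of_ord (inord (j + 6) : 'I_14) = (j + 6)%N by rewrite inordK.
  case: (keep j); rewrite !mxE /h ?ej ?ej6 e12 e13 /=; last by [].
  rewrite ltn_ord.
  have -> : (j + 6 < 6)%N = false by rewrite ltnNge leq_addl.
  have -> : (j + 6 < 12)%N by rewrite -[12%N]/(6 + 6)%N ltn_add2r.
  by rewrite addnK inord_val reluN.
- move=> i; rewrite /h; case: ifP => _; first exact: aff_proj.
  case: ifP => _; first by apply: aff_opp; apply: aff_proj.
  by case: ifP.
- move=> j; rewrite /o; case: (keep j); aff_tac.
Qed.

Lemma blkE (R : realType) keep (k0 c1 c2 : 'I_6 -> R) (e1 e2 : 'cV[R]_6 -> R) x i :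
  (i < 6)%N ->
  cpt (blk keep k0 c1 c2 e1 e2 x) i =
  (if keep (inord i) then cpt x i else k0 (inord i)) + c1 (inord i) * relu (e1 x)
   + c2 (inord i) * relu (e2 x).
Proof. by move=> hi; rewrite /cpt mxE. Qed.

Lemma cos_le1_mono (R : realType) (a b : R) : 0 <= a -> a <= b -> b <= pi -> cos b <= cos a.
Proof.
move=> a0 ab bpi; case: (eqVneq a b) => [->//|nab].
have ab' : a < b by rewrite lt_neqAle nab ab.
apply: ltW; rewrite ltr_cos //; rewrite in_itv /=; apply/andP; split=> //; lra.
Qed.

Lemma sin_ge_cos1 (R : realType) (z : R) : 0 <= z <= 1 -> cos 1 * z <= sin z.
Proof.
move=> /andP[z0 z1].
have [c Hc E] := @MVT_segment R sin cos 0 z z0 (fun x _ => is_derive_sin x)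
   (continuous_subspaceT (@continuous_sin R)).
move: Hc; rewrite in_itv /= => /andP[c0 cz].
rewrite sin0 subr0 subr0 in E.
have pi1 : (1 : R) <= pi by have := @pi_ge2 R; lra.
have := cos_le1_mono c0 (le_trans cz z1) pi1.
move=> h; rewrite E; apply: ler_wpM2r => //.
Qed.

Lemma sinLB (R : realType) (z : R) : 0 <= z <= pi / 2 -> cos 1 / 2 * z <= sin z.
Proof.
move=> /andP[z0 zp].
have c1 : 0 < cos 1 :> R by apply: cos1_gt0.
have ph := @pihalf_lt2 R.
case: (lerP z 1) => z1.
  have := sin_ge_cos1 (z := z); rewrite z0 z1 => /(_ isT) h.
  have : cos 1 / 2 * z <= cos 1 * z by rewrite ler_wpM2r // ler_pdivrMr //; lra.
  lra.
have s1 := sin_ge_cos1 (z := (1 : R)); rewrite ler01 lexx /= mulr1 in s1.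
have : sin 1 <= sin z.
  case: (eqVneq z 1) => [->//|n1]. apply: ltW.
  rewrite ltr_sin // ?in_itv /=; apply/andP; split; lra.
have : cos 1 / 2 * z <= cos 1.
  rewrite -[X in _ <= X]mulr1 -mulrA ler_wpM2l; lra.
lra.
Qed.

Ltac relu_case z := let h := fresh "hr" in
  case: (lerP 0 z) => h; [rewrite (relu_pos h) | rewrite (relu_neg (ltW h))].

Lemma sinLB' (R : realType) (z : R) : 0 <= z <= pi / 2 -> z <= 2 / cos 1 * sin z.
Proof.
move=> hz; have h := sinLB hz; have c1 : 0 < cos 1 :> R by apply: cos1_gt0.
rewrite -(ler_pM2l (_ : 0 < cos 1 / 2)); last by rewrite divr_gt0.
rewrite mulrA (_ : cos 1 / 2 * (2 / cos 1) = 1) ?mul1r //.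
by field; rewrite gt_eqF.
Qed.

Definition bet (R : realType) (k : nat) : R := pi / 2 ^+ k.+1.

Lemma bet_gt0 (R : realType) k : 0 < bet R k.
Proof. by rewrite /bet divr_gt0 ?pi_gt0 // exprn_gt0. Qed.

Lemma betS (R : realType) k : 2 * bet R k.+1 = bet R k.
Proof.
rewrite /bet exprS; field; by rewrite gt_eqF // exprn_gt0.
Qed.

Lemma bet_le (R : realType) k : bet R k <= pi / 2.
Proof.
rewrite /bet ler_pM2l ?pi_gt0 // lef_pV2 ?posrE ?exprn_gt0 //.
by rewrite -[X in X <= _]expr1 ler_eXn2l // ltr1n.
Qed.

Fixpoint thn (R : realType) (t : R) (k : nat) : R :=
  match k with 0%N => t | k'.+1 => bet R k' - `|bet R k' - thn t k'| end.

Lemma thn_range (R : realType) (t : R) k : 0 <= t <= pi -> 0 <= thn t k <= 2 * bet R k.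
Proof.
move=> /andP[t0 tp]; elim: k => [|k /andP[h0 h1]] /=.
  by rewrite /bet expr1 mulrC divfK ?t0 ?tp ?pnatr_eq0.
rewrite betS; have := bet_gt0 R k.
case: (lerP 0 (bet R k - thn t k)) => h; [rewrite ger0_norm // | rewrite ltr0_norm //];
 move=> ?; apply/andP; split; lra.
Qed.

Lemma fold_trig (R : realType) (b t : R) : 0 < b -> b <= pi / 2 -> 0 <= t <= 2 * b ->
  let r := relu (- (sin b * cos t - cos b * sin t)) in
  cos t + 2 * sin b * r = cos (b - `|b - t|) /\
  sin t + - (2 * cos b) * r = sin (b - `|b - t|).
Proof.
move=> b0 bp /andP[t0 tb] r.
have pi2 : pi / 2 <= pi :> R by have := @pi_gt0 R; lra.
rewrite /r -sinB.
case: (lerP t b) => h.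
  have sg : 0 <= sin (b - t) by rewrite sin_ge0_pi //; apply/andP; split; lra.
  rewrite relu_neg ?oppr_le0 // !mulr0 !addr0 (_ : b - (b - t) = t) //; ring.
have e1 : cos t = cos (t - b) * cos b - sin (t - b) * sin b by rewrite -cosD subrK.
have e2 : sin t = sin (t - b) * cos b + cos (t - b) * sin b by rewrite -sinD subrK.
have e3 : sin (b - t) = - sin (t - b) by rewrite -sinN opprB.
rewrite e3 opprK relu_pos; last by rewrite sin_ge0_pi //; apply/andP; split; lra.
rewrite [cos (b - _)]cosB [sin (b - _)]sinB e1 e2; split; ring.
Qed.

Lemma upd_ok (R : realType) (b t v d : R) : 0 < b -> b <= pi / 2 -> 0 <= t <= 2 * b ->
  0 <= v -> `|v - (b - `|b - t|)| <= d ->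
  let s := sin (b - t) in
  let v' := b + (-1) * relu (b - v - 2 / cos 1 * relu (- s)) + 1 * relu (b - v - 2 / cos 1 * relu s) in
  `|v' - t| <= d /\ 0 <= v' <= 2 * b.
Proof.
move=> b0 bp /andP[t0 tb] v0 hd s v'.
have pi2 : pi / 2 <= pi :> R by have := @pi_gt0 R; lra.
rewrite /v' /s; clear v' s.
rewrite ler_norml in hd; case/andP: hd => hd1 hd2.
have c1 : 0 < cos 1 :> R by apply: cos1_gt0.
have Mp : 0 < 2 / cos 1 :> R by rewrite divr_gt0.
case: (lerP t b) => h.
  have sg : 0 <= sin (b - t) by rewrite sin_ge0_pi //; apply/andP; split; lra.
  have hM := @sinLB' R (b - t); rewrite subr_ge0 h /= in hM.
  have {}hM : b - t <= 2 / cos 1 * sin (b - t) by apply: hM; lra.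
  rewrite (relu_neg (_ : - sin (b - t) <= 0)) ?oppr_le0 // (relu_pos sg) mulr0 subr0.
  rewrite ger0_norm ?subr_ge0 // in hd1 hd2.
  set w := 2 / cos 1 * sin (b - t) in hM *.
  relu_case (b - v); relu_case (b - v - w); split; rewrite ?ler_norml; apply/andP; split; lra.
have sg : 0 <= sin (t - b) by rewrite sin_ge0_pi //; apply/andP; split; lra.
have hM := @sinLB' R (t - b); rewrite subr_ge0 (ltW h) /= in hM.
have {}hM : t - b <= 2 / cos 1 * sin (t - b) by apply: hM; lra.
have e3 : sin (b - t) = - sin (t - b) by rewrite -sinN opprB.
rewrite e3 opprK (relu_neg (_ : - sin (t - b) <= 0)) ?oppr_le0 // (relu_pos sg) mulr0 subr0.
rewrite ltr0_norm ?subr_lt0 // in hd1 hd2.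
set w := 2 / cos 1 * sin (t - b) in hM *.
relu_case (b - v); relu_case (b - v - w); split; rewrite ?ler_norml; apply/andP; split; lra.
Qed.


Local Close Scope classical_set_scope.

Definition Mc (R : realType) : R := 2 / cos 1.

Definition fold (R : realType) (k : nat) : 'cV[R]_6 -> 'cV[R]_6 :=
  blk (fun _ => true) (fun _ => 0)
    (fun j => if nat_of_ord j == 3%N then 2 * sin (bet R k)
              else if nat_of_ord j == 4%N then - (2 * cos (bet R k)) else 0)
    (fun _ => 0)
    (fun x => - (sin (bet R k) * x (inord 3) 0 - cos (bet R k) * x (inord 4) 0))
    (fun _ => 0).

Definition updA (R : realType) (k : nat) : 'cV[R]_6 -> 'cV[R]_6 :=
  blk (fun j => (nat_of_ord j != 3%N) && (nat_of_ord j != 4%N)) (fun _ => 0)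
    (fun j => if nat_of_ord j == 3%N then 1 else 0)
    (fun j => if nat_of_ord j == 4%N then 1 else 0)
    (fun x => sin (bet R k) * x (inord 3) 0 - cos (bet R k) * x (inord 4) 0)
    (fun x => - (sin (bet R k) * x (inord 3) 0 - cos (bet R k) * x (inord 4) 0)).

Definition updB (R : realType) (k : nat) : 'cV[R]_6 -> 'cV[R]_6 :=
  blk (fun j => nat_of_ord j != 5%N) (fun _ => bet R k)
    (fun j => if nat_of_ord j == 5%N then -1 else 0)
    (fun j => if nat_of_ord j == 5%N then 1 else 0)
    (fun x => bet R k - x (inord 5) 0 - Mc R * x (inord 4) 0)
    (fun x => bet R k - x (inord 5) 0 - Mc R * x (inord 3) 0).

Definition ro (R : realType) (j : 'I_6) : 'cV[R]_6 -> R :=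
  if nat_of_ord j == 3%N then (fun x => x (inord 0) 0)
  else if nat_of_ord j == 4%N then (fun x => x (inord 1) 0) else (fun x => x j 0).
Definition reset (R : realType) (x : 'cV[R]_6) : 'cV[R]_6 := \col_j ro j x.

Arguments fold : clear implicits.
Arguments updA : clear implicits.
Arguments updB : clear implicits.
Arguments Mc : clear implicits.

Lemma fold_net (R : realType) k : NetF (fold R k) 1 14.
Proof. apply: blk_net; aff_tac. Qed.
Lemma updA_net (R : realType) k : NetF (updA R k) 1 14.
Proof. apply: blk_net; aff_tac. Qed.
Lemma updB_net (R : realType) k : NetF (updB R k) 1 14.
Proof. apply: blk_net; aff_tac. Qed.
Lemma reset_net (R : realType) : NetF (@reset R) 0 0.
Proof.
apply: net_aff => j; rewrite /ro; case: ifP => _; [|case: ifP => _]; exact: aff_proj.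
Qed.

Lemma ik (i : nat) : (i < 6)%N -> nat_of_ord (inord i : 'I_6) = i.
Proof. by move=> h; rewrite inordK. Qed.

Lemma resetE (R : realType) (x : 'cV[R]_6) i : (i < 6)%N ->
  cpt (reset x) i = if i == 3%N then cpt x 0 else if i == 4%N then cpt x 1 else cpt x i.
Proof. by move=> h; rewrite /cpt /reset mxE /ro ik //; case: ifP => //; case: ifP. Qed.

Definition Q (R : realType) (x : 'cV[R]_6) (a b c v t : R) :=
  cpt x 0 = a /\ cpt x 1 = b /\ cpt x 2 = c /\ cpt x 3 = cos t /\ cpt x 4 = sin t /\ cpt x 5 = v.

Fixpoint Fch (R : realType) (k : nat) (x : 'cV[R]_6) : 'cV[R]_6 :=
  match k with 0%N => x | k'.+1 => fold R k' (Fch k' x) end.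

Lemma Fch_ok (R : realType) (th a b c v : R) x k : 0 <= th <= pi ->
  Q x a b c v th -> Q (Fch k x) a b c v (thn th k).
Proof.
move=> hth; elim: k => [//|k IH] /= hQ.
case: (IH hQ) => h0 [h1 [h2 [h3 [h4 h5]]]].
have := @fold_trig R (bet R k) (thn th k) (bet_gt0 R k) (bet_le R k) (thn_range k hth).
move=> [E3 E4].
rewrite /fold; (repeat split); rewrite blkE // ?ik //=.
- by rewrite ?mul0r ?addr0 h0.
- by rewrite ?mul0r ?addr0 h1.
- by rewrite ?mul0r ?addr0 h2.
- rewrite -[Fch k x (inord 3) 0]/(cpt (Fch k x) 3) -[Fch k x (inord 4) 0]/(cpt (Fch k x) 4).
  by rewrite h3 h4 ?mul0r ?addr0 E3.
- rewrite -[Fch k x (inord 3) 0]/(cpt (Fch k x) 3) -[Fch k x (inord 4) 0]/(cpt (Fch k x) 4).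
  by rewrite h3 h4 ?mul0r ?addr0 E4.
- by rewrite ?mul0r ?addr0 h5.
Qed.

Lemma updAE (R : realType) k (y : 'cV[R]_6) :
  let s := sin (bet R k) * cpt y 3 - cos (bet R k) * cpt y 4 in
  cpt (updA R k y) 0 = cpt y 0 /\ cpt (updA R k y) 1 = cpt y 1 /\
  cpt (updA R k y) 2 = cpt y 2 /\ cpt (updA R k y) 3 = relu s /\
  cpt (updA R k y) 4 = relu (- s) /\ cpt (updA R k y) 5 = cpt y 5.
Proof.
by rewrite /updA; (repeat split); rewrite blkE // ik //= ?mul0r ?mul1r ?addr0 ?add0r.
Qed.

Lemma updBE (R : realType) k (z : 'cV[R]_6) :
  cpt (updB R k z) 0 = cpt z 0 /\ cpt (updB R k z) 1 = cpt z 1 /\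
  cpt (updB R k z) 2 = cpt z 2 /\
  cpt (updB R k z) 5 = bet R k + (-1) * relu (bet R k - cpt z 5 - Mc R * cpt z 4)
                       + 1 * relu (bet R k - cpt z 5 - Mc R * cpt z 3).
Proof.
by rewrite /updB; (repeat split); rewrite blkE // ik //= ?mul0r ?mul1r ?addr0 ?add0r.
Qed.

Definition U (R : realType) (k : nat) (x : 'cV[R]_6) := updB R k (updA R k (Fch k (reset x))).
Arguments U : clear implicits.

Lemma U_ok (R : realType) (th c v d : R) (x : 'cV[R]_6) k : 0 <= th <= pi ->
  cpt x 0 = cos th -> cpt x 1 = sin th -> cpt x 2 = c -> cpt x 5 = v -> 0 <= v ->
  `|v - thn th k.+1| <= d ->
  cpt (U R k x) 0 = cos th /\ cpt (U R k x) 1 = sin th /\ cpt (U R k x) 2 = c /\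
  `|cpt (U R k x) 5 - thn th k| <= d /\ 0 <= cpt (U R k x) 5 <= 2 * bet R k.
Proof.
move=> hth x0 x1 x2 x5 v0 hd.
have hQ : Q (reset x) (cos th) (sin th) c v th.
  by (repeat split); rewrite resetE.
have [g0 [g1 [g2 [g3 [g4 g5]]]]] := Fch_ok k hth hQ.
set y := Fch k (reset x) in g0 g1 g2 g3 g4 g5.
have [a0 [a1 [a2 [a3 [a4 a5]]]]] := updAE k y.
have [b0 [b1 [b2 b5]]] := updBE k (updA R k y).
rewrite /U -/y b0 b1 b2 b5 a0 a1 a2 a3 a4 a5 g0 g1 g2 g3 g4 g5 /=.
have := @upd_ok R (bet R k) (thn th k) v d (bet_gt0 R k) (bet_le R k) (thn_range k hth) v0 hd.
rewrite /= sinB /Mc => -[h1 h2]; do 3 split => //.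
Qed.

Fixpoint Uch (R : realType) (k : nat) (x : 'cV[R]_6) : 'cV[R]_6 :=
  match k with 0%N => x | k'.+1 => Uch k' (U R k' x) end.
Arguments Uch : clear implicits.

Lemma bet0 (R : realType) : 2 * bet R 0 = pi.
Proof. by rewrite /bet expr1 mulrC divfK ?pnatr_eq0. Qed.

Lemma Uch_ok (R : realType) (th c d : R) k : 0 <= th <= pi ->
  forall (x : 'cV[R]_6), cpt x 0 = cos th -> cpt x 1 = sin th -> cpt x 2 = c ->
  0 <= cpt x 5 <= 2 * bet R k -> `|cpt x 5 - thn th k| <= d ->
  cpt (Uch R k x) 0 = cos th /\ cpt (Uch R k x) 1 = sin th /\ cpt (Uch R k x) 2 = c /\
  `|cpt (Uch R k x) 5 - th| <= d /\ 0 <= cpt (Uch R k x) 5 <= pi.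
Proof.
move=> hth; elim: k => [|k IH] x x0 x1 x2 hv hd /=.
  do 3 (split=> //); split=> //; by rewrite -(bet0 R).
case/andP: hv => v0 _.
have [u0 [u1 [u2 [ud uv]]]] := @U_ok R th c (cpt x 5) d x k hth x0 x1 x2 (erefl _) v0 hd.
exact: IH.
Qed.

Lemma Fch_net (R : realType) k : NetF (Fch (R:=R) k) k 14.
Proof.
elim: k => [|k IH].
  by apply: net_mono (net_id R 6).
apply: net_ext (net_mono _ _ (net_comp IH (fold_net R k))) => //.
by rewrite addn1.
Qed.

Lemma U_net (R : realType) k : NetF (U R k) k.+2 14.
Proof.
have h1 := net_comp (reset_net R) (Fch_net R k).
have h2 := net_comp h1 (updA_net R k).
have h3 := net_comp h2 (updB_net R k).
apply: net_mono h3; by rewrite ?add0n ?addn1 ?addn2 ?maxnn ?max0n.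
Qed.

Lemma Uch_net (R : realType) k : NetF (Uch R k) (k * k.+2) 14.
Proof.
elim: k => [|k IH].
  by apply: net_mono (net_id R 6).
apply: net_ext (net_mono _ _ (net_comp (U_net R k) IH)) => //.
  by rewrite mulSn mulnS; lia.
Qed.

Definition ih (R : realType) (i : 'I_4) : 'cV[R]_2 -> R :=
  if nat_of_ord i == 0%N then (fun x => x (inord 0) 0)
  else if nat_of_ord i == 1%N then (fun x => - x (inord 0) 0)
  else if nat_of_ord i == 2%N then (fun x => x (inord 1) 0)
  else (fun x => - x (inord 1) 0).
Definition io (R : realType) (j : 'I_6) : 'cV[R]_4 -> R :=
  if nat_of_ord j == 0%N then (fun y => y (inord 0) 0 - y (inord 1) 0)
  else if nat_of_ord j == 1%N then (fun y => y (inord 2) 0 + y (inord 3) 0)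
  else if nat_of_ord j == 2%N then (fun y => y (inord 3) 0)
  else (fun _ => 0).
Definition init (R : realType) (x : 'cV[R]_2) : 'cV[R]_6 :=
  \col_j io j (\col_i relu (ih i x)).

Lemma init_net (R : realType) : NetF (@init R) 1 4.
Proof.
apply: net_layer => [i|j].
  rewrite /ih; do 3 (case: ifP => _; first by aff_tac); aff_tac.
rewrite /io; do 3 (case: ifP => _; first by aff_tac); aff_tac.
Qed.

Lemma relu_abs (R : realType) (b : R) : relu b + relu (- b) = `|b|.
Proof.
case: (lerP 0 b) => h.
  by rewrite relu_pos // relu_neg ?addr0 ?ger0_norm // oppr_le0.
by rewrite relu_neg ?ltW // relu_pos ?add0r ?ltr0_norm // oppr_ge0 ltW.
Qed.

Lemma initE (R : realType) (a b : R) :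
  cpt (init (pt2 a b)) 0 = a /\ cpt (init (pt2 a b)) 1 = `|b| /\
  cpt (init (pt2 a b)) 2 = relu (- b) /\ cpt (init (pt2 a b)) 5 = 0.
Proof.
have i0 : nat_of_ord (inord 0 : 'I_4) = 0%N by rewrite inordK.
have i1 : nat_of_ord (inord 1 : 'I_4) = 1%N by rewrite inordK.
have i2 : nat_of_ord (inord 2 : 'I_4) = 2%N by rewrite inordK.
have i3 : nat_of_ord (inord 3 : 'I_4) = 3%N by rewrite inordK.
have p0 : (pt2 a b) (inord 0) 0 = a by rewrite /pt2 mxE -[val _]/(nat_of_ord _) inordK.
have p1 : (pt2 a b) (inord 1) 0 = b by rewrite /pt2 mxE -[val _]/(nat_of_ord _) inordK.
rewrite /init /cpt; (repeat split); rewrite mxE /io ik //= !mxE /ih ?i0 ?i1 ?i2 ?i3 /= ?p0 ?p1.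
- exact: reluN.
- exact: relu_abs.
- by [].
Qed.

Definition fh (R : realType) (Mf : R) (i : 'I_3) : 'cV[R]_6 -> R :=
  if nat_of_ord i == 0%N then (fun x => x (inord 5) 0)
  else if nat_of_ord i == 1%N then (fun x => - x (inord 5) 0)
  else (fun x => 2 * pi - 2 * x (inord 5) 0 - Mf * x (inord 2) 0).
Definition fo (R : realType) (j : 'I_1) : 'cV[R]_3 -> R :=
  fun y => 2 * pi - (y (inord 0) 0 - y (inord 1) 0) - y (inord 2) 0.
Definition final (R : realType) (Mf : R) (x : 'cV[R]_6) : 'cV[R]_1 :=
  \col_j fo j (\col_i relu (fh Mf i x)).

Lemma final_net (R : realType) (Mf : R) : NetF (final Mf) 1 3.
Proof.
apply: net_layer => [i|j].
  rewrite /fh; do 2 (case: ifP => _; first by aff_tac); aff_tac.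
rewrite /fo; aff_tac.
Qed.

Lemma finalE (R : realType) (Mf : R) x :
  final Mf x 0 0 = 2 * pi - cpt x 5 - relu (2 * pi - 2 * cpt x 5 - Mf * cpt x 2).
Proof.
have i0 : nat_of_ord (inord 0 : 'I_3) = 0%N by rewrite inordK.
have i1 : nat_of_ord (inord 1 : 'I_3) = 1%N by rewrite inordK.
have i2 : nat_of_ord (inord 2 : 'I_3) = 2%N by rewrite inordK.
by rewrite /final mxE /fo !mxE /fh i0 i1 i2 /= reluN.
Qed.

Lemma two_pi (R : realType) : 2 * pi = pi *+ 2 :> R.
Proof. by rewrite mulr_natl. Qed.

Lemma angle_fold (R : realType) (xi : R) : 0 <= xi -> xi <= 2 * pi ->
  let th := if xi <= pi then xi else 2 * pi - xi in
  0 <= th <= pi /\ cos th = cos xi /\ sin th = `|sin xi|.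
Proof.
move=> x0 x2 th; rewrite /th; case: ifP => h.
  by rewrite x0 h ger0_norm // sin_ge0_pi // x0 h.
move/negbT: h; rewrite -ltNge => h.
have c2 : cos (2 * pi - xi) = cos xi by rewrite cosB two_pi cos2pi sin2pi mul1r mul0r addr0.
have s2 : sin (2 * pi - xi) = - sin xi by rewrite sinB two_pi cos2pi sin2pi mul1r mul0r sub0r.
have hs : 0 <= sin (2 * pi - xi) by rewrite sin_ge0_pi //; apply/andP; split; lra.
rewrite c2 s2; rewrite s2 in hs; rewrite ler0_norm; last by lra.
split=> //; apply/andP; split; lra.
Qed.

Lemma final_acc (R : realType) (eps d v th w : R) : 0 < eps -> 3 * d <= eps ->
  `|v - th| <= d -> 0 <= v -> 0 <= d -> eps <= th -> th <= pi -> 0 <= w ->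
  ((th <= pi / 2 /\ 2 * pi <= w) \/ (pi / 2 <= th /\ 4 * (pi - th) <= w)) ->
  `|(2 * pi - th) - (2 * pi - v - relu (2 * pi - 2 * v - w))| <= eps.
Proof.
move=> e0 de hd v0 d0 eth thp w0 hw.
rewrite ler_norml in hd; case/andP: hd => hd1 hd2.
relu_case (2 * pi - 2 * v - w); rewrite ler_norml; apply/andP; split;
 case: hw => -[h1 h2]; lra.
Qed.

Lemma yn_lemma (R : realType) (xi : R) : 0 <= xi -> xi <= 2 * pi ->
  relu (- sin xi) = if xi <= pi then 0 else sin (2 * pi - xi).
Proof.
move=> x0 x2; case: ifP => h.
  by rewrite relu_neg // oppr_le0 sin_ge0_pi // x0 h.
move/negbT: h; rewrite -ltNge => h.
have s2 : sin (2 * pi - xi) = - sin xi by rewrite sinB two_pi cos2pi sin2pi mul1r mul0r sub0r.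
have hs : 0 <= sin (2 * pi - xi) by rewrite sin_ge0_pi //; apply/andP; split; lra.
by rewrite s2 relu_pos // -s2.
Qed.

Lemma sin_pi_sub (R : realType) (x : R) : sin (pi - x) = sin x.
Proof. by rewrite sinB sinpi cospi mul0r mulN1r sub0r opprK. Qed.

Lemma acc_lemma (R : realType) (eps d v xi Mf : R) : 0 < eps -> eps <= 2^-1 ->
  3 * d <= eps -> 0 <= d -> Mf = 4 * pi / (cos 1 * eps) -> 0 <= xi -> xi <= 2 * pi - eps ->
  `|v - (if xi <= pi then xi else 2 * pi - xi)| <= d -> 0 <= v -> v <= pi ->
  `|xi - (2 * pi - v - relu (2 * pi - 2 * v - Mf * relu (- sin xi)))| <= eps.
Proof.
move=> e0 e2 de d0 eMf xi0 xi2' hd v0 vp.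
have xi2 : xi <= 2 * pi by lra.
have c1 : 0 < cos 1 :> R by apply: cos1_gt0.
have Mf0 : 0 <= Mf by rewrite eMf divr_ge0 ?mulr_ge0 ?ltW ?pi_gt0 //.
  rewrite (yn_lemma xi0 xi2).
  case: ifP hd => h hd.
    rewrite mulr0 subr0 relu_pos; last by lra.
    rewrite ler_norml in hd; rewrite ler_norml; case/andP: hd => ? ?; apply/andP; split; lra.
  have xiE : xi = 2 * pi - (2 * pi - xi) by ring.
  rewrite [X in `|X - _|]xiE.
  move/negbT: h; rewrite -ltNge => h.
  set t := 2 * pi - xi in hd *.
  have t0 : 0 <= t by rewrite /t; lra.
  have tp : t <= pi by rewrite /t; lra.
  have st : 0 <= sin t by rewrite sin_ge0_pi // t0 tp.
  apply: (final_acc e0 de hd v0 d0) => //; first by rewrite /t; lra.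
    exact: mulr_ge0.
  have ce : cos 1 != 0 :> R by rewrite gt_eqF.
  have ee : eps != 0 by rewrite gt_eqF.
  case: (lerP t (pi / 2)) => ht.
    left; split => //.
    have := @sinLB R t; rewrite t0 ht => /(_ isT) hs.
    have E1 : Mf * (cos 1 / 2 * eps) = 2 * pi by rewrite eMf; field; rewrite ce ee.
    rewrite -E1; apply: le_trans (ler_wpM2l Mf0 hs); apply: ler_wpM2l => //.
    apply: ler_wpM2l; [by rewrite divr_ge0 ?ltW | by rewrite /t; lra].
  right; split; first exact: ltW.
  have := @sinLB R (pi - t); rewrite sin_pi_sub.
  have -> : 0 <= pi - t <= pi / 2 by apply/andP; split; lra.
  move=> /(_ isT) hs.
  have E2 : Mf * (cos 1 / 2 * (pi - t)) = 2 * pi / eps * (pi - t) by rewrite eMf; field; rewrite ce ee.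
  apply: le_trans (ler_wpM2l Mf0 hs); rewrite E2.
  apply: ler_wpM2r; first by lra.
  rewrite ler_pdivlMr //; have := @pi_ge2 R; lra.
Qed.

Lemma range_lemma (R : realType) (v Mf yn : R) : 0 <= v -> v <= pi -> 0 <= Mf -> 0 <= yn ->
  0 <= 2 * pi - v - relu (2 * pi - 2 * v - Mf * yn) <= 2 * pi.
Proof.
move=> v0 vp M0 y0.
have w0 : 0 <= Mf * yn by rewrite mulr_ge0.
set w := Mf * yn in w0 *.
have := @pi_ge2 R.
relu_case (2 * pi - 2 * v - w); move=> ?; apply/andP; split; lra.
Qed.

Lemma depth_lemma (R : realType) (L : R) (m n : nat) : ln 2 <= L ->
  m%:R <= (ln 12 + L) / ln 2 + 1 -> (n <= 5 * m * m)%N ->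
  n%:R <= (5 * ((2 + ln 12 / ln 2) / ln 2) ^+ 2 + 14) * L ^+ 2.
Proof.
move=> Lge hm hn.
have ln2 : 0 < ln (2 : R) by apply: ln_gt0; rewrite ltr1n.
have l12 : 0 <= ln (12 : R) by apply: ltW; apply: ln_gt0; rewrite ltr1n.
set q := ln (12 : R) / ln 2.
have q0 : 0 <= q by rewrite /q divr_ge0 // ltW.
set K := (2 + q) / ln 2.
have K0 : 0 <= K by rewrite /K divr_ge0 // ?ltW //; lra.
have L0 : 0 <= L by lra.
have mK : m%:R <= K * L.
  pose r := L / ln 2.
  have r1 : 1 <= r by rewrite /r ler_pdivlMr // mul1r.
  have qr : q <= q * r by rewrite ler_peMr.
  have e1 : (ln 12 + L) / ln 2 = q + r by rewrite /q /r mulrDl.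
  have e2 : K * L = 2 * r + q * r by rewrite /K /r; field; rewrite gt_eqF.
  rewrite e2; rewrite e1 in hm; lra.
apply: le_trans (_ : (5 * m * m)%N%:R <= _); first by rewrite ler_nat.
rewrite !natrM.
have m0 : 0 <= (m%:R : R) by [].
have h1 : (m%:R : R) * m%:R <= (K * L) * (K * L) by apply: ler_pM.
have h2 : 0 <= 14 * (L * L) by rewrite mulr_ge0 // mulr_ge0.
rewrite !expr2.
have -> : (5 * (K * K) + 14) * (L * L) = 5 * ((K * L) * (K * L)) + 14 * (L * L) by ring.
set a := (m%:R : R) * m%:R in h1 *; set b := K * L * (K * L) in h1 *.
rewrite -mulrA -/a; lra.
Qed.

Lemma nat_bound (m : nat) : (0 < m)%N -> (1 + m * m.+2 + 1 <= 5 * m * m)%N.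
Proof. move=> h; nia. Qed.

Lemma hP_lemma (R : realType) (eps : R) (m : nat) : 0 < eps ->
  (ln 12 + ln eps^-1) / ln 2 < m%:R -> 12 <= (2 : R) ^+ m * eps.
Proof.
move=> e0 hm.
have ln2 : 0 < ln (2 : R) by apply: ln_gt0; rewrite ltr1n.
have ei0 : 0 < eps^-1 by rewrite invr_gt0.
have h1 : ln (12 * eps^-1) = ln 12 + ln eps^-1 :> R by rewrite lnM ?posrE.
have h2 : ln ((2:R) ^+ m) = ln 2 * m%:R by rewrite lnXn // mulr_natr.
have h3 : 12 * eps^-1 <= (2:R) ^+ m.
  rewrite -ler_ln ?posrE ?mulr_gt0 ?exprn_gt0 // h1 h2.
  by move: hm; rewrite ltr_pdivrMr // mulrC => h; exact: ltW.
by rewrite -ler_pdivrMr.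
Qed.

Theorem mainTheorem8 (R : realType) :
  exists C : R, 0 < C /\
  forall eps : R, 0 < eps -> eps <= 2^-1 ->
  exists Xi : relu_net R 2,
    (forall xi : R, 0 <= xi -> xi <= 2 * pi - eps ->
       `|xi - realize Xi (pt2 (cos xi) (sin xi))| <= eps) /\
    (forall xi : R, 0 <= xi -> xi <= 2 * pi ->
       0 <= realize Xi (pt2 (cos xi) (sin xi)) <= 2 * pi) /\
    ((depth Xi)%:R <= C * (ln (eps^-1)) ^+ 2) /\
    ((width Xi)%:R <= C).
Proof.
have ln2 : 0 < ln (2 : R) by apply: ln_gt0; rewrite ltr1n.
have l12 : 0 <= ln (12 : R) by apply: ltW; apply: ln_gt0; rewrite ltr1n.
have K0 : 0 <= (2 + ln 12 / ln 2) / ln (2:R).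
  apply: divr_ge0; [apply: addr_ge0; [by [] | exact: divr_ge0 l12 (ltW ln2)] | exact: ltW].
have K2 : 0 <= 5 * ((2 + ln 12 / ln 2) / ln (2:R)) ^+ 2 by rewrite mulr_ge0 // sqr_ge0.
exists (5 * ((2 + ln 12 / ln 2) / ln 2) ^+ 2 + 14); split.
  by move: K2; lra.
move=> eps e0 e2.
have ei0 : 0 < eps^-1 by rewrite invr_gt0.
have ei2 : 2 <= eps^-1.
  rewrite -(@ler_pM2l _ eps) // mulfV ?gt_eqF //; lra.
pose L := ln (eps^-1).
have Lge : ln 2 <= L by rewrite /L ler_ln ?posrE //.
pose x0 := (ln 12 + L) / ln 2.
have x00 : 0 <= x0 by rewrite /x0 divr_ge0 ?ltW //; lra.
have [m [hm1 [hm2 m1]]] : exists m : nat, m%:R <= x0 + 1 /\ x0 < m%:R /\ (0 < m)%N.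
  exists (Num.truncn x0).+1.
  have := truncn_itv x00; case/andP => a b; split; last by split.
  by rewrite -addn1 natrD lerD2r.
have P0 : 0 < (2 : R) ^+ m by rewrite exprn_gt0.
have hP : 12 <= (2 : R) ^+ m * eps by exact: hP_lemma.
pose d := 2 * bet R m.
have dE : d = pi / 2 ^+ m by rewrite /d /bet exprS; field; rewrite gt_eqF.
have d0 : 0 <= d by rewrite /d mulr_ge0 // ltW // bet_gt0.
have de : 3 * d <= eps.
  rewrite dE mulrA ler_pdivrMr //.
  have hP' : 12 <= eps * 2 ^+ m by move: hP; rewrite [_ * eps]mulrC.
  have := @pihalf_lt2 R; lra.
pose Mf := 4 * pi / (cos 1 * eps).
have c1 : 0 < cos 1 :> R by apply: cos1_gt0.
have Mf0 : 0 <= Mf by rewrite /Mf divr_ge0 ?mulr_ge0 ?ltW ?pi_gt0 //.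
have Hn := net_comp (net_comp (init_net R) (Uch_net R m)) (final_net Mf).
case: Hn => N [NE [ND NW]].
exists (toRelu N).
have key : forall xi, 0 <= xi -> xi <= 2 * pi ->
  let th := if xi <= pi then xi else 2 * pi - xi in
  exists v, realize (toRelu N) (pt2 (cos xi) (sin xi)) =
     2 * pi - v - relu (2 * pi - 2 * v - Mf * relu (- sin xi)) /\
     `|v - th| <= d /\ 0 <= v <= pi.
  move=> xi xi0 xi2 th.
  have [hth [hc hs]] := angle_fold xi0 xi2.
  have [i0 [i1 [i2 i5]]] := initE (cos xi) (sin xi).
  have := @Uch_ok R th (relu (- sin xi)) d m hth (init (pt2 (cos xi) (sin xi))).
  rewrite i0 i1 i2 i5 hc hs => H.
  have b0 := bet_gt0 R m; have tr := thn_range m hth.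
  have hv : 0 <= (0 : R) <= 2 * bet R m by rewrite lexx /= mulr_ge0 // ltW.
  have hd : `|0 - thn th m| <= d.
    by case/andP: tr => t0 t1; rewrite sub0r normrN ger0_norm.
  have [u0 [u1 [u2 [ud uv]]]] := H erefl erefl erefl hv hd.
  exists (cpt (Uch R m (init (pt2 (cos xi) (sin xi)))) 5); split => //.
  by rewrite toReluE NE finalE u2.
split.
  move=> xi xi0 xi2'.
  have xi2 : xi <= 2 * pi by apply: (le_trans xi2'); rewrite lerBlDr lerDl ltW.
  move: (key xi xi0 xi2) => /= -[v [E [hd /andP[v0 vp]]]].
  rewrite E; exact: (acc_lemma e0 e2 de d0 erefl xi0 xi2' hd v0 vp).
split.
  move=> xi xi0 xi2; move: (key xi xi0 xi2) => /= -[v [E [hd /andP[v0 vp]]]].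
  rewrite E; apply: range_lemma => //; exact: relu_ge0.
rewrite toRelu_depth toRelu_width; split.
  apply: (depth_lemma Lge hm1); apply: leq_trans ND _; exact: nat_bound.
apply: le_trans (_ : 14%:R <= _); first by rewrite ler_nat (leq_trans NW).
by move: K2; lra.
Qed.
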